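(* Let $T>0$, $B=e_3$ constant, and let $E:[0,T]\times\mathbb{R}^2\to\mathbb{R}^2$ be bounded and Lipschitz. For $\Delta t>0$, $\varepsilon>0$ set $t^n=n\Delta t$, $\lambda=\Delta t/\varepsilon^2$, and given $(x^0,v^0)$ define $(x^n,v^n)$ by $$\varepsilon\frac{x^{n+1}-x^n}{\Delta t}=v^{n+1},\qquad \varepsilon\frac{v^{n+1}-v^n}{\Delta t}=\frac1\varepsilon v^{n+1}\wedge e_3+E(t^n,x^n),$$ and $(y^n)$ by the modified initial datum $y^0=x^0+\varepsilon\big(v^0\wedge e_3+\varepsilon E(t^0,x^0)\big)$ and $\dfrac{y^{n+1}-y^n}{\Delta t}=E(t^n,y^n)\wedge e_3$. Then there exist $C>0$ and $\lambda_0>0$ depending only on $E$ and $T$ such that whenever $0<\Delta t\le1$ and $\lambda\ge\lambda_0$, for all $n\ge1$ with $t^n\le T$, $$\|x^n-y^n\|\le\frac{C\,\Delta t}{\lambda}\Big[1+\Big(\frac1\lambda+\Delta t\Big)\Big\|\frac{v^0}{\varepsilon}-E(t^0,x^0)\wedge e_3\Big\|\Big].$$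
   Context: Vectors of $\mathbb{R}^2$ are identified with vectors $(w_1,w_2,0)$ of $\mathbb{R}^3$, $e_3=(0,0,1)$, and $\wedge$ is the cross product; thus for $w\in\mathbb{R}^2$, $w\wedge e_3=(w_2,-w_1)\in\mathbb{R}^2$. *)

(* Defs.v *)
From Stdlib Require Import Reals Lra.
Open Scope R_scope.

Definition vec2 : Type := (R * R)%type.

Definition vadd (a b : vec2) : vec2 := (fst a + fst b, snd a + snd b).
Definition vsub (a b : vec2) : vec2 := (fst a - fst b, snd a - snd b).
Definition vscale (c : R) (a : vec2) : vec2 := (c * fst a, c * snd a).

Definition vnorm (a : vec2) : R := sqrt (fst a ^ 2 + snd a ^ 2).

(* w /\ e3 = (w2, -w1) for w = (w1, w2, 0) *)
Definition wedge_e3 (w : vec2) : vec2 := (snd w, - fst w).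

Definition bounded_field (T : R) (E : R -> vec2 -> vec2) : Prop :=
  exists M : R, forall t x, 0 <= t <= T -> vnorm (E t x) <= M.

Definition lipschitz_field (T : R) (E : R -> vec2 -> vec2) : Prop :=
  exists L : R, forall t s x y, 0 <= t <= T -> 0 <= s <= T ->
    vnorm (vsub (E t x) (E s y)) <= L * (Rabs (t - s) + vnorm (vsub x y)).

(* Main.v *)
Require Import Defs.
From Stdlib Require Import Reals Lra Psatz Lia.
Open Scope R_scope.

Lemma vnorm_nonneg a : 0 <= vnorm a.
Proof. unfold vnorm; apply sqrt_pos. Qed.

Lemma sqrt_le_of a s : 0 <= s -> a <= s ^ 2 -> sqrt a <= s.
Proof. intros Hs H. rewrite <- (sqrt_pow2 s Hs). now apply sqrt_le_1_alt. Qed.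

Lemma vnorm_triangle a b : vnorm (vadd a b) <= vnorm a + vnorm b.
Proof.
  destruct a as [a1 a2], b as [b1 b2]; unfold vnorm, vadd; simpl.
  set (u := sqrt (a1*(a1*1) + a2*(a2*1))).
  set (w := sqrt (b1*(b1*1) + b2*(b2*1))).
  assert (Hu : 0 <= u) by apply sqrt_pos. assert (Hw : 0 <= w) by apply sqrt_pos.
  assert (Hu2 : u*u = a1*(a1*1) + a2*(a2*1)) by (apply sqrt_sqrt; nra).
  assert (Hw2 : w*w = b1*(b1*1) + b2*(b2*1)) by (apply sqrt_sqrt; nra).
  apply sqrt_le_of; [lra|]. simpl.
  assert (Hc : a1*b1 + a2*b2 <= u*w).
  { assert (0 <= u*w) by nra.
    assert ((u*w)*(u*w) - (a1*b1+a2*b2)*(a1*b1+a2*b2) = (a1*b2-a2*b1)*(a1*b2-a2*b1)).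
    { replace ((u*w)*(u*w)) with ((u*u)*(w*w)) by ring. rewrite Hu2, Hw2. ring. }
    set (p := a1*b1+a2*b2) in *. set (q := u*w) in *.
    destruct (Rle_dec p q) as [|Hn]; [assumption|].
    exfalso. assert (Hpq : q < p) by lra.
    assert (0 <= (a1*b2-a2*b1)*(a1*b2-a2*b1)) by apply Rle_0_sqr.
    assert (q*q <= q*p) by (apply Rmult_le_compat_l; lra).
    assert (q*p < p*p) by (apply Rmult_lt_compat_r; lra). lra. }
  nra.
Qed.

Lemma vnorm_wedge a : vnorm (wedge_e3 a) = vnorm a.
Proof. destruct a; unfold vnorm, wedge_e3; simpl. f_equal; ring. Qed.

Lemma vnorm_scale c a : vnorm (vscale c a) = Rabs c * vnorm a.
Proof.
  destruct a as [a1 a2]; unfold vnorm, vscale; simpl.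
  rewrite <- (sqrt_pow2 (Rabs c)) by apply Rabs_pos.
  rewrite <- sqrt_mult by (try apply pow2_ge_0; nra).
  f_equal. rewrite pow2_abs. ring.
Qed.

Lemma vnorm_sub_tri a b c : vnorm (vsub a c) <= vnorm (vsub a b) + vnorm (vsub b c).
Proof.
  replace (vsub a c) with (vadd (vsub a b) (vsub b c)).
  - apply vnorm_triangle.
  - destruct a, b, c; unfold vadd, vsub; simpl; f_equal; ring.
Qed.

Lemma vnorm_sub_le a b : vnorm (vsub a b) <= vnorm a + vnorm b.
Proof.
  replace (vsub a b) with (vadd a (vscale (-1) b)).
  - eapply Rle_trans; [apply vnorm_triangle|]. rewrite vnorm_scale.
    replace (Rabs (-1)) with 1 by (unfold Rabs; destruct Rcase_abs; lra). lra.
  - destruct a, b; unfold vadd, vsub, vscale; simpl; f_equal; ring.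
Qed.

Lemma vnorm_resolvent lam p q : 0 < lam ->
  vsub p (vscale lam (wedge_e3 p)) = q -> lam * vnorm p <= vnorm q.
Proof.
  intros Hl Hq; subst q. destruct p as [p1 p2]; unfold vnorm, vsub, vscale, wedge_e3; simpl.
  rewrite <- (sqrt_pow2 lam) at 1 by lra.
  rewrite <- sqrt_mult by (try apply pow2_ge_0; nra).
  apply sqrt_le_1_alt. simpl. assert (0 <= p1*p1 + p2*p2) by nra. nra.
Qed.

Lemma exp_pow a n : exp a ^ n = exp (INR n * a).
Proof.
  induction n.
  - simpl. rewrite Rmult_0_l, exp_0. reflexivity.
  - rewrite S_INR. simpl pow. rewrite IHn, <- exp_plus. f_equal; ring.
Qed.
Lemma final_ineq K M L0 T dt il K0 e2: 1<=K -> 0<=M -> 0<=L0 -> 0<T -> 0<dt<=1 -> 0<=il -> 0<=K0 -> 0<e2 ->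
 K*e2*(M + L0*dt*(M+K0) + L0*T*(K0*il+3*M)) + e2*(K0*il+3*M) <= (K*(M+L0*M+3*L0*T*M) + 3*M + K*L0 + K*L0*T + 1)*e2*(1 + (il+dt)*K0).
Proof.
  intros HK HM HL HT Hdt Hil HK0 He.
  match goal with |- _ <= ?C * e2 * ?Z =>
    replace (C*e2*Z) with (e2*(C*Z)) by ring end.
  match goal with |- K*e2*?X + e2*?Y <= _ =>
    replace (K*e2*X + e2*Y) with (e2*(K*X+Y)) by ring end.
  apply Rmult_le_compat_l; [lra|].
  assert (HKL: 0 <= K*L0) by nra.
  assert (HKLT: 0 <= K*L0*T) by nra.
  assert (HB: 0 <= K*(M+L0*M+3*L0*T*M)) by (apply Rmult_le_pos; nra).
  assert (A1: 0 <= K*L0*M*(1-dt)) by (repeat apply Rmult_le_pos; lra).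
  assert (A2: 0 <= il*K0*(K*(M+L0*M+3*L0*T*M) + 3*M + K*L0)) by (repeat apply Rmult_le_pos; lra).
  assert (A3: 0 <= dt*K0*(K*(M+L0*M+3*L0*T*M) + 3*M + K*L0*T+1)) by (repeat apply Rmult_le_pos; lra).
  lra.
Qed.

Lemma div_bound lam a b : 0 < lam -> lam * a <= b -> a <= b / lam.
Proof.
  intros Hl H. replace a with ((lam*a)*/lam) by (field; lra).
  unfold Rdiv. apply Rmult_le_compat_r; [left; apply Rinv_0_lt_compat; lra | exact H].
Qed.

Theorem mainTheorem6 (T : R) (E : R -> vec2 -> vec2) :
  0 < T -> bounded_field T E -> lipschitz_field T E ->
  exists C lambda0 : R, 0 < C /\ 0 < lambda0 /\
    forall (dt eps : R) (x v y : nat -> vec2),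
      0 < dt <= 1 -> 0 < eps ->
      lambda0 <= dt / eps ^ 2 ->
      (forall n, vscale (eps / dt) (vsub (x (S n)) (x n)) = v (S n)) ->
      (forall n, vscale (eps / dt) (vsub (v (S n)) (v n)) =
                 vadd (vscale (1 / eps) (wedge_e3 (v (S n)))) (E (INR n * dt) (x n))) ->
      y 0%nat = vadd (x 0%nat)
                  (vscale eps (vadd (wedge_e3 (v 0%nat)) (vscale eps (E 0 (x 0%nat))))) ->
      (forall n, vscale (1 / dt) (vsub (y (S n)) (y n)) = wedge_e3 (E (INR n * dt) (y n))) ->
      forall n : nat, (1 <= n)%nat -> INR n * dt <= T ->
        vnorm (vsub (x n) (y n)) <=
          C * dt / (dt / eps ^ 2) *
          (1 + (1 / (dt / eps ^ 2) + dt) *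
               vnorm (vsub (vscale (1 / eps) (v 0%nat)) (wedge_e3 (E 0 (x 0%nat))))).
Proof.
  intros HT [M HM] [L HL].
  assert (HM0 : 0 <= M).
  { eapply Rle_trans; [apply vnorm_nonneg| apply (HM 0 (0,0)); lra]. }
  set (L0 := Rabs L).
  assert (HL0pos: 0 <= L0) by apply Rabs_pos.
  assert (HL0: forall t a b, 0<=t<=T -> vnorm (vsub (E t a) (E t b)) <= L0 * vnorm (vsub a b)).
  { intros t a b Ht. eapply Rle_trans; [apply HL; eauto|].
    unfold Rminus. rewrite Rplus_opp_r, Rabs_R0, Rplus_0_l.
    apply Rmult_le_compat_r; [apply vnorm_nonneg| apply RRle_abs]. }
  set (K := exp (L0*T)).
  assert (HK : 1 <= K).
  { unfold K. eapply Rle_trans; [|apply exp_ineq1_le]. nra. }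
  set (C := K*(M+L0*M+3*L0*T*M) + 3*M + K*L0 + K*L0*T + 1).
  exists C, 2.
  split.
  { unfold C. assert (0 <= L0*M) by (apply Rmult_le_pos; lra).
    assert (0 <= L0*T*M) by (repeat apply Rmult_le_pos; lra).
    assert (0 <= K*(M+L0*M+3*L0*T*M)) by (apply Rmult_le_pos; lra).
    assert (0 <= K*L0) by (apply Rmult_le_pos; lra).
    assert (0 <= K*L0*T) by (repeat apply Rmult_le_pos; lra). lra. }
  split; [lra|].
  intros dt eps x v y [Hdt0 Hdt1] Heps Hlam Hx Hv Hy0 Hy n Hn HnT.
  assert (He2 : 0 < eps^2) by (apply pow_lt; lra).
  set (lam := dt/eps^2) in *.
  assert (Hlam0 : 0 < lam) by lra.
  set (K0 := vnorm (vsub (vscale (1/eps) (v 0%nat)) (wedge_e3 (E 0 (x 0%nat))))).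
  assert (HK0 : 0 <= K0) by apply vnorm_nonneg.
  set (w := fun k => vscale (1/eps) (v k)).
  set (Ex := fun k => E (INR k * dt) (x k)).
  set (d := fun k => vsub (vadd (x k) (vscale eps (wedge_e3 (v k)))) (y k)).
  assert (Hw : forall k, vsub (w (S k)) (vscale lam (wedge_e3 (w (S k)))) = vadd (w k) (vscale lam (Ex k))).
  { intro k. pose proof (Hv k) as H. revert H. unfold w, Ex, lam; cbv beta.
    destruct (v (S k)) as [a1 a2]; destruct (v k) as [b1 b2]; destruct (E (INR k * dt) (x k)) as [e1 e2].
    unfold vscale, vsub, vadd, wedge_e3; simpl. intro H; injection H as H1 H2.
    assert (a1 - b1 = dt/eps*(1/eps*a2 + e1)) by (rewrite <- H1; field; lra).
    assert (a2 - b2 = dt/eps*(1/eps*(-a1) + e2)) by (rewrite <- H2; field; lra).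
    f_equal.
    - replace a1 with (b1 + dt/eps*(1/eps*a2 + e1)) by lra. field. lra.
    - replace a2 with (b2 + dt/eps*(1/eps*(-a1) + e2)) by lra. field. lra. }
  assert (Hres : forall k, lam * vnorm (vsub (w (S k)) (wedge_e3 (Ex k))) <= vnorm (vsub (w k) (wedge_e3 (Ex k)))).
  { intro k. apply vnorm_resolvent; [lra|]. pose proof (Hw k) as H. revert H.
    destruct (w (S k)) as [a1 a2]; destruct (w k) as [b1 b2]; destruct (Ex k) as [e1 e2].
    unfold vscale, vsub, vadd, wedge_e3; simpl. intro H; injection H as H1 H2.
    f_equal; nra. }
  assert (Hz : forall k, d (S k) = vadd (d k) (vscale dt (wedge_e3 (vsub (Ex k) (E (INR k * dt) (y k)))))).
  { intro k. pose proof (Hx k) as Hxk. pose proof (Hv k) as Hvk. pose proof (Hy k) as Hyk.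
    revert Hxk Hvk Hyk. unfold d, Ex; cbv beta.
    destruct (E (INR k * dt) (x k)) as [e1 e2]; destruct (E (INR k * dt) (y k)) as [f1 f2].
    destruct (x (S k)) as [X1 X2]; destruct (x k) as [x1 x2].
    destruct (v (S k)) as [a1 a2]; destruct (v k) as [b1 b2].
    destruct (y (S k)) as [Y1 Y2]; destruct (y k) as [y1 y2].
    unfold vscale, vsub, vadd, wedge_e3; simpl. intros Hxk Hvk Hyk.
    injection Hxk as Hx1 Hx2. injection Hvk as Hv1 Hv2. injection Hyk as Hy1 Hy2.
    assert (X1 = x1 + dt/eps*a1) by (rewrite <- Hx1; field; lra).
    assert (X2 = x2 + dt/eps*a2) by (rewrite <- Hx2; field; lra).
    assert (a1 = b1 + dt/eps*(1/eps*a2 + e1)) by (rewrite <- Hv1; field; lra).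
    assert (a2 = b2 + dt/eps*(1/eps*(-a1) + e2)) by (rewrite <- Hv2; field; lra).
    assert (Y1 = y1 + dt*f2) by (rewrite <- Hy1; field; lra).
    assert (Y2 = y2 + dt*(-f1)) by (rewrite <- Hy2; field; lra).
    f_equal.
    - rewrite H, H2, H3. field. lra.
    - rewrite H0, H1, H4. field. lra. }
  assert (Hd0 : d 0%nat = vscale (-(eps^2)) (E 0 (x 0%nat))).
  { unfold d; cbv beta. rewrite Hy0. destruct (x 0%nat), (v 0%nat), (E 0 (x 0%nat)).
    unfold vscale, vsub, vadd, wedge_e3; simpl. f_equal; ring. }
  assert (Hxy : forall k, vnorm (vsub (x k) (y k)) <= vnorm (d k) + eps^2 * vnorm (w k)).
  { intro k. replace (vsub (x k) (y k)) with (vsub (d k) (vscale (eps^2) (wedge_e3 (w k)))).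
    - eapply Rle_trans; [apply vnorm_sub_le|]. rewrite vnorm_scale, vnorm_wedge.
      rewrite Rabs_pos_eq by lra. lra.
    - unfold d, w; cbv beta. destruct (x k), (v k), (y k).
      unfold vscale, vsub, vadd, wedge_e3; simpl. f_equal; field; lra. }
  assert (HtT : forall k, INR k * dt <= T -> 0 <= INR k * dt <= T).
  { intros k Hk. split; [apply Rmult_le_pos; [apply pos_INR|lra]|exact Hk]. }
  assert (HSk : forall k, INR (S k) * dt <= T -> INR k * dt <= T).
  { intros k Hk. rewrite S_INR in Hk. lra. }
  assert (HE : forall k, INR k * dt <= T -> vnorm (Ex k) <= M).
  { intros k Hk. apply HM. now apply HtT. }
  assert (Hdstep : forall k, INR k * dt <= T ->
     vnorm (d (S k)) <= (1 + dt*L0) * vnorm (d k) + dt*L0*eps^2*vnorm (w k)).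
  { intros k Hk. rewrite Hz. eapply Rle_trans; [apply vnorm_triangle|].
    rewrite vnorm_scale, vnorm_wedge, Rabs_pos_eq by lra.
    assert (H1 : vnorm (vsub (Ex k) (E (INR k * dt) (y k))) <= L0 * vnorm (vsub (x k) (y k))).
    { unfold Ex. apply HL0. now apply HtT. }
    pose proof (Hxy k).
    assert (dt * vnorm (vsub (Ex k) (E (INR k * dt) (y k))) <= dt * (L0 * (vnorm (d k) + eps ^ 2 * vnorm (w k)))).
    { apply Rmult_le_compat_l; [lra|]. eapply Rle_trans; [exact H1|].
      apply Rmult_le_compat_l; [lra|exact H]. }
    nra. }
  assert (Hex0 : Ex 0%nat = E 0 (x 0%nat)).
  { unfold Ex. simpl INR. rewrite Rmult_0_l. reflexivity. }
  assert (Ha : forall k, INR (S k) * dt <= T -> vnorm (vsub (w (S k)) (wedge_e3 (Ex k))) <= K0/lam + 2*M).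
  { induction k as [|k IH]; intros Hk.
    - pose proof (Hres 0%nat) as H. rewrite Hex0 in H |- *.
      assert (vnorm (vsub (w 0%nat) (wedge_e3 (E 0 (x 0%nat)))) = K0) by reflexivity.
      rewrite H0 in H. apply div_bound in H; [|lra]. lra.
    - pose proof (HSk _ Hk) as Hk'. pose proof (HSk _ Hk') as Hk''.
      specialize (IH Hk'). pose proof (Hres (S k)) as H.
      assert (H2 : vnorm (vsub (wedge_e3 (Ex k)) (wedge_e3 (Ex (S k)))) <= 2*M).
      { eapply Rle_trans; [apply vnorm_sub_le|]. rewrite !vnorm_wedge.
        pose proof (HE _ Hk'). pose proof (HE _ Hk''). lra. }
      pose proof (vnorm_sub_tri (w (S k)) (wedge_e3 (Ex k)) (wedge_e3 (Ex (S k)))) as H3.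
      set (X := vnorm (vsub (w (S (S k))) (wedge_e3 (Ex (S k))))) in *.
      set (A := K0/lam) in *.
      assert (HA : 0 <= A) by (unfold A; apply Rmult_le_pos; [lra|left; apply Rinv_0_lt_compat; lra]).
      assert (Hl : lam * X <= A + 4*M) by lra.
      assert (HX : 0 <= X) by apply vnorm_nonneg.
      assert (Hil : lam * X * /lam = X) by (field; lra).
      assert (Hi : 0 < /lam <= 1/2).
      { split; [apply Rinv_0_lt_compat; lra|]. apply Rinv_le_contravar in Hlam; lra. }
      assert (X <= /lam * (A + 4*M)).
      { rewrite <- Hil, Rmult_comm. apply Rmult_le_compat_l; lra. }
      nra. }
  assert (Hsplit : forall a b, vnorm a <= vnorm (vsub a (wedge_e3 b)) + vnorm b).
  { intros a b. replace a with (vadd (vsub a (wedge_e3 b)) (wedge_e3 b)) at 1.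
    - eapply Rle_trans; [apply vnorm_triangle|]. rewrite vnorm_wedge. lra.
    - destruct a, b; unfold vadd, vsub, wedge_e3; simpl; f_equal; ring. }
  assert (Hwb : forall k, INR (S k) * dt <= T -> vnorm (w (S k)) <= K0/lam + 3*M).
  { intros k Hk. pose proof (Hsplit (w (S k)) (Ex k)). pose proof (Ha k Hk).
    pose proof (HE k (HSk _ Hk)). lra. }
  assert (Hw0 : vnorm (w 0%nat) <= K0 + M).
  { pose proof (Hsplit (w 0%nat) (E 0 (x 0%nat))).
    assert (vnorm (E 0 (x 0%nat)) <= M) by (apply HM; lra).
    assert (vnorm (vsub (w 0%nat) (wedge_e3 (E 0 (x 0%nat)))) = K0) by reflexivity. lra. }
  set (P := dt*L0).
  assert (HP : 0 <= P) by (unfold P; apply Rmult_le_pos; lra).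
  set (S0 := K0/lam + 3*M).
  assert (HS0 : 0 <= S0).
  { unfold S0. assert (0 <= K0/lam) by (apply Rmult_le_pos; [lra|left; apply Rinv_0_lt_compat; lra]). lra. }
  set (G := M + L0*dt*(M+K0)).
  assert (HG : 0 <= G) by (unfold G; assert (0 <= L0*dt*(M+K0)) by (repeat apply Rmult_le_pos; lra); lra).
  assert (Hpow : forall k, 1 <= (1+P)^k).
  { intro k. apply pow_R1_Rle. lra. }
  assert (Hdb : forall k, INR (S k)*dt <= T ->
     vnorm (d (S k)) <= (1+P)^(S k) * eps^2 * (G + L0*(INR k*dt)*S0)).
  { induction k as [|k IH]; intros Hk.
    - pose proof (Hdstep 0%nat ltac:(simpl; lra)) as H.
      rewrite Hd0, vnorm_scale in H.
      rewrite Rabs_left in H by lra. rewrite Ropp_involutive in H.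
      assert (HE0 : vnorm (E 0 (x 0%nat)) <= M) by (apply HM; lra).
      assert (H1 : eps^2 * vnorm (E 0 (x 0%nat)) <= eps^2 * M) by (apply Rmult_le_compat_l; lra).
      assert (H2 : P*eps^2*vnorm (w 0%nat) <= P*eps^2*(K0+M)).
      { apply Rmult_le_compat_l; [apply Rmult_le_pos; lra|exact Hw0]. }
      fold P in H.
      assert (H3 : (1+P)*(eps^2 * vnorm (E 0 (x 0%nat))) <= (1+P)*(eps^2*M)) by (apply Rmult_le_compat_l; lra).
      simpl INR. simpl pow. unfold G.
      assert (0 <= P*P*eps^2*(M+K0)) by (repeat apply Rmult_le_pos; lra).
      replace (L0*dt) with P by (unfold P; ring).
      nra.
    - pose proof (HSk _ Hk) as Hk'. specialize (IH Hk').
      pose proof (Hdstep (S k) Hk') as H. fold P in H.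
      pose proof (Hwb k Hk') as H1.
      assert (H2 : P*eps^2*vnorm (w (S k)) <= P*eps^2*S0).
      { apply Rmult_le_compat_l; [apply Rmult_le_pos; lra|exact H1]. }
      assert (H3 : (1+P)*vnorm (d (S k)) <= (1+P)*((1+P)^(S k) * eps^2 * (G + L0*(INR k*dt)*S0))).
      { apply Rmult_le_compat_l; lra. }
      pose proof (Hpow (S (S k))) as Hq.
      assert (H4 : P*eps^2*S0 <= (1+P)^(S (S k))*eps^2*(P*S0)).
      { replace (P*eps^2*S0) with (1*(eps^2*(P*S0))) by ring.
        rewrite Rmult_assoc. apply Rmult_le_compat_r; [|lra].
        apply Rmult_le_pos; [lra|]. apply Rmult_le_pos; lra. }
      rewrite S_INR.
      replace ((1+P)^(S (S k)) * eps^2 * (G + L0*((INR k + 1)*dt)*S0))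
        with ((1+P)*((1+P)^(S k) * eps^2 * (G + L0*(INR k*dt)*S0)) + (1+P)^(S (S k))*eps^2*(P*S0))
        by (unfold P; simpl; ring).
      lra. }
  destruct n as [|n']; [lia|].
  pose proof (Hxy (S n')) as H1. pose proof (Hdb n' HnT) as H2. pose proof (Hwb n' HnT) as H3.
  pose proof (HSk _ HnT) as Hn'.
  assert (Hexp : (1+P)^(S n') <= K).
  { apply Rle_trans with ((exp P)^(S n')).
    - apply pow_incr. split; [lra|]. apply exp_ineq1_le.
    - rewrite exp_pow. unfold K.
      assert (Hle : INR (S n') * P <= L0 * T).
      { unfold P. replace (INR (S n') * (dt*L0)) with (L0 * (INR (S n')*dt)) by ring.
        apply Rmult_le_compat_l; lra. }
      destruct (Rle_lt_or_eq_dec _ _ Hle) as [Hlt|Heq].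
      + left; apply exp_increasing; exact Hlt.
      + right; rewrite Heq; reflexivity. }
  assert (H4 : G + L0*(INR n'*dt)*S0 <= G + L0*T*S0).
  { apply Rplus_le_compat_l. apply Rmult_le_compat_r; [lra|]. apply Rmult_le_compat_l; lra. }
  assert (H5 : (1+P)^(S n') * eps^2 * (G + L0*(INR n'*dt)*S0) <= K*eps^2*(G + L0*T*S0)).
  { apply Rmult_le_compat; try lra.
    - apply Rmult_le_pos; [pose proof (Hpow (S n')); lra|lra].
    - assert (0 <= L0*(INR n'*dt)*S0) by (repeat apply Rmult_le_pos; try lra; apply pos_INR). lra.
    - apply Rmult_le_compat_r; lra. }
  assert (H6 : eps^2 * vnorm (w (S n')) <= eps^2 * S0) by (apply Rmult_le_compat_l; unfold S0; lra).
  replace (C * dt / lam) with (C * eps^2) by (unfold lam; field; lra).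
  pose proof (final_ineq K M L0 T dt (1/lam) K0 (eps^2) HK HM0 HL0pos HT (conj Hdt0 Hdt1)
      ltac:(left; apply Rdiv_lt_0_compat; lra) HK0 He2) as HF.
  unfold S0, G in *. replace (K0/lam) with (K0*(1/lam)) in * by (field; lra).
  fold C in HF. lra.
Qed.
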